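(* The group $G$ contains 3-cycles.
   Context: Fix $m\in\mathbb{N}$, a prime power $q$, and $n\geq 3$. Let $\Delta=\mathrm{Gal}(\mathbb{F}_{q^m}:\mathbb{F}_q)$ act coordinatewise on $\mathbb{F}_{q^m}^n$; $\mathcal{X}$ is the union of orbits of size $m$, $\bar{\mathcal{X}}$ the set of these orbits. The tame automorphism group $\mathrm{TA}_n(\mathbb{F}_q)$ (generated by invertible affine maps and triangular maps $(a_1X_1+f_1,\dots,a_nX_n+f_n)$, $a_i\in\mathbb{F}_q^*$, $f_i\in\mathbb{F}_q[X_{i+1},\dots,X_n]$) acts on $\bar{\mathcal{X}}$, and $G$ is the image of $\mathrm{TA}_n(\mathbb{F}_q)\to\mathrm{Sym}(\bar{\mathcal{X}})$. *)

(* Defs.v *)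
From HB Require Import structures.
From mathcomp Require Import all_boot all_order all_algebra all_fingroup.
From mathcomp Require Import mpoly.
Set Implicit Arguments. Unset Strict Implicit. Unset Printing Implicit Defensive.
Import GRing.Theory.
Local Open Scope ring_scope.

(* Setting: F = F_q, L = F_{q^m}, iota : F -> L the field embedding.
   Points of L^n are finite functions 'I_n -> L. *)

Section Tame.
Variables (F L : finFieldType) (iota : {rmorphism F -> L}) (n : nat).

Definition pt := {ffun 'I_n -> L}.

(* Delta = Gal(L : F): field automorphisms of L fixing iota(F) pointwise
   (a ring endomorphism of a finite field is automatically bijective). *)
Definition galois_set : {set {ffun L -> L}} :=
  [set s : {ffun L -> L} |
     [&& s 1 == 1,
         [forall x, forall y, s (x + y) == s x + s y],
         [forall x, forall y, s (x * y) == s x * s y] &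
         [forall c : F, s (iota c) == iota c]]].

Definition gal_act (s : {ffun L -> L}) (x : pt) : pt := [ffun i => s (x i)].

Definition gal_orbit (x : pt) : {set pt} := [set gal_act s x | s in galois_set].

Definition Xset (m : nat) : {set pt} := [set x | #|gal_orbit x| == m].
Definition Xbar (m : nat) : {set {set pt}} := [set gal_orbit x | x in Xset m].

Definition poly_act (P : 'I_n -> {mpoly F[n]}) (x : pt) : pt :=
  [ffun i => mmap iota x (P i)].

Definition affine_map (A : 'M[F]_n) (b : 'I_n -> F) : 'I_n -> {mpoly F[n]} :=
  fun i => \sum_(j < n) (A i j)%:MP * 'X_j + (b i)%:MP.

(* f only involves the variables X_{i+1}, ..., X_n (0-based: X_j with j > i) *)
Definition only_later_vars (i : 'I_n) (f : {mpoly F[n]}) : bool :=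
  all (fun mo : 'X_{1..n} => [forall j : 'I_n, (j <= i)%N ==> (mo j == 0%N)])
      (msupp f).

Definition triangular_map (a : 'I_n -> F) (f : 'I_n -> {mpoly F[n]})
  : 'I_n -> {mpoly F[n]} :=
  fun i => (a i)%:MP * 'X_i + f i.

Definition tame_generator (P : 'I_n -> {mpoly F[n]}) : Prop :=
  (exists (A : 'M[F]_n) (b : 'I_n -> F),
      A \in unitmx /\ P = affine_map A b)
  \/ (exists (a : 'I_n -> F) (f : 'I_n -> {mpoly F[n]}),
      (forall i, a i != 0) /\ (forall i, only_later_vars i (f i)) /\
      P = triangular_map a f).

(* turn a function on a finite type into a permutation (it is only ever
   applied to bijections; the fallback 1 is never used in that case) *)
Definition perm_of (T : finType) (g : T -> T) : {perm T} :=
  match injectiveb g as b return injectiveb g = b -> {perm T} with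
  | true => fun h => perm (injectiveP g h)
  | false => fun _ => 1%g
  end (erefl _).

Definition orbit_perm (m : nat) (P : 'I_n -> {mpoly F[n]}) : {perm {set pt}} :=
  perm_of (fun O : {set pt} =>
             if O \in Xbar m then [set poly_act P x | x in O] else O).

(* G = image of TA_n(F_q) in Sym(Xbar), i.e. the subgroup generated by the
   images of the generators: all finite products of images of generators and
   their inverses. *)
Inductive in_G (m : nat) : {perm {set pt}} -> Prop :=
  | in_G1 : in_G m 1%g
  | in_G_mul (P : 'I_n -> {mpoly F[n]}) (s : {perm {set pt}}) :
      tame_generator P -> in_G m s -> in_G m (orbit_perm m P * s)%g
  | in_G_mulV (P : 'I_n -> {mpoly F[n]}) (s : {perm {set pt}}) :
      tame_generator P -> in_G m s -> in_G m ((orbit_perm m P)^-1 * s)%g.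

Definition is_3cycle_on (T : finType) (X : {set T}) (s : {perm T}) : Prop :=
  exists a b c : T,
    [/\ [/\ a \in X, b \in X & c \in X],
        [/\ a != b, b != c & a != c],
        [/\ s a = b, s b = c & s c = a] &
        (forall y, y \in X -> ~~ (y \in [:: a; b; c]) -> s y = y)].

End Tame.

(* Main.v *)
Require Import Defs.
From HB Require Import structures.
From mathcomp Require Import all_boot all_order all_algebra all_fingroup.
From mathcomp Require Import mpoly.
From mathcomp Require Import cyclic finalg finfield.
From mathcomp Require Import zify.
From Stdlib Require Import Lia.
Set Implicit Arguments. Unset Strict Implicit. Unset Printing Implicit Defensive.
Import GRing.Theory.
Local Open Scope ring_scope.

Section Gal.
Variables (F L : finFieldType) (iota : {rmorphism F -> L}).
Local Notation q := #|F|.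

Lemma q_gt1 : (1 < q)%N. Proof. exact: finNzRing_gt1. Qed.

Lemma pnat_q : [char L].-nat q.
Proof.
have [p pp pcF] := finPcharP F.
have pcL := rmorph_pchar iota pcF.
have -> : q = (p ^ logn p q)%N by exact: (card_pprimeChar pcF).
by rewrite pnatX (pnatE _ pp) pcL.
Qed.

Lemma powqk_add k (x y : L) : (x + y) ^+ (q ^ k) = x ^+ (q ^ k) + y ^+ (q ^ k).
Proof. by apply: exprDn_pchar; rewrite pnatX pnat_q. Qed.

Lemma powF k (c : F) : c ^+ (q ^ k) = c.
Proof. by elim: k => [|k IH]; rewrite ?expr1 // expnSr exprM IH expf_card. Qed.

Lemma iota_pow k c : iota c ^+ (q ^ k) = iota c.
Proof. by rewrite -rmorphXn powF. Qed.

Definition frob k : {ffun L -> L} := [ffun x => x ^+ (q ^ k)].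

Lemma frob_gal k : frob k \in galois_set iota.
Proof.
rewrite inE !ffunE expr1n eqxx /=; apply/and3P; split.
- by apply/forallP => x; apply/forallP => y; rewrite !ffunE powqk_add.
- by apply/forallP => x; apply/forallP => y; rewrite !ffunE exprMn.
- by apply/forallP => c; rewrite ffunE iota_pow.
Qed.

Section GS.
Variable s : {ffun L -> L}.
Hypothesis hs : s \in galois_set iota.

Lemma gs1 : s 1 = 1. Proof. by move: hs; rewrite inE => /and4P [/eqP]. Qed.
Lemma gsD x y : s (x + y) = s x + s y.
Proof. by move: hs; rewrite inE => /and4P [_ /forallP/(_ x)/forallP/(_ y)/eqP]. Qed.
Lemma gsM x y : s (x * y) = s x * s y.
Proof. by move: hs; rewrite inE => /and4P [_ _ /forallP/(_ x)/forallP/(_ y)/eqP]. Qed.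
Lemma gsi c : s (iota c) = iota c.
Proof. by move: hs; rewrite inE => /and4P [_ _ _ /forallP/(_ c)/eqP]. Qed.
Lemma gs0 : s 0 = 0.
Proof. by apply: (addrI (s 0)); rewrite -gsD !addr0. Qed.
Lemma gsX x k : s (x ^+ k) = s x ^+ k.
Proof. by elim: k => [|k IH]; rewrite ?expr0 ?gs1 // !exprS gsM IH. Qed.
Lemma gs_sum (I : Type) (r : seq I) (P : pred I) (f : I -> L) :
  s (\sum_(i <- r | P i) f i) = \sum_(i <- r | P i) s (f i).
Proof. exact: (big_morph s gsD gs0). Qed.
Lemma gs_prod (I : Type) (r : seq I) (P : pred I) (f : I -> L) :
  s (\prod_(i <- r | P i) f i) = \prod_(i <- r | P i) s (f i).
Proof. exact: (big_morph s gsM gs1). Qed.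

Lemma gs_mmap n (h : 'I_n -> L) (p : {mpoly F[n]}) :
  s (mmap iota h p) = mmap iota (fun i => s (h i)) p.
Proof.
rewrite /mmap gs_sum; apply: eq_bigr => mo _; rewrite gsM gsi /mmap1 gs_prod.
by congr (_ * _); apply: eq_bigr => i _; rewrite gsX.
Qed.

Lemma gs_horner (p : {poly F}) x :
  s ((map_poly iota p).[x]) = (map_poly iota p).[s x].
Proof.
rewrite !horner_coef gs_sum; apply: eq_bigr => i _.
by rewrite gsM gsX coef_map gsi.
Qed.
End GS.

Variable m : nat.
Hypothesis hL : #|L| = (q ^ m)%N.
Hypothesis m_gt0 : (0 < m)%N.
Local Notation Q := #|L|.

Lemma powQ a (t : L) : t ^+ (q ^ (a * m)) = t.
Proof.
elim: a => [|a IH]; first by rewrite mul0n expr1.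
by rewrite mulSn expnD exprM -hL expf_card IH.
Qed.

Lemma frob_mod k t : frob k t = frob (k %% m) t.
Proof. by rewrite !ffunE {1}(divn_eq k m) expnD exprM powQ. Qed.

Lemma frob_comp i j t : frob i (frob j t) = frob (i + j) t.
Proof. by rewrite !ffunE -exprM -expnD addnC. Qed.

Lemma frob0 t : frob 0 t = t.
Proof. by rewrite ffunE expr1. Qed.

Lemma Q_gt1 : (1 < Q)%N. Proof. exact: finNzRing_gt1. Qed.

Lemma unitQ (t : L) : t != 0 -> t ^+ Q.-1 = 1.
Proof.
move=> nz; apply: (mulfI nz); rewrite mulr1 -exprS prednK ?expf_card //.
by apply: ltnW; apply: Q_gt1.
Qed.

Lemma exists_beta : exists b : L, (Q.-1).-primitive_root b.
Proof.
pose rs := enum (predC1 (0 : L)).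
have : has (Q.-1).-primitive_root rs.
  apply: has_prim_root.
  - by rewrite -ltnS prednK ?Q_gt1 // ltnW // Q_gt1.
  - apply/allP => x; rewrite mem_enum /= => nz; rewrite unity_rootE.
    by rewrite unitQ.
  - exact: enum_uniq.
  - by rewrite -cardE cardC1.
by case/hasP => b _ hb; exists b.
Qed.

Section Beta.
Variable b : L.
Hypothesis hb : (Q.-1).-primitive_root b.

Lemma frob_b_inj (i j : 'I_m) : frob i b = frob j b -> i = j.
Proof.
rewrite !ffunE => /eqP; rewrite (eq_prim_root_expr hb) => e.
apply/val_inj => /=.
have [m1|m2] := leqP m 1.
  by move: (ltn_ord i) (ltn_ord j); lia.
have lt a : (a < m)%N -> (q ^ a < Q.-1)%N.
  move=> am; have q2 := q_gt1.
  have h1 : (q ^ a * q <= Q)%N by rewrite hL -expnSr leq_pexp2l // ltnW.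
  have h2 : (q ^ a * 2 <= q ^ a * q)%N by rewrite leq_mul2l q2 orbT.
  have h3 : (1 <= q ^ a)%N by rewrite expn_gt0 ltnW.
  have h4 : (4 <= Q)%N.
    rewrite hL; apply: (@leq_trans (q ^ 2)); last by rewrite leq_pexp2l // ltnW.
    by rewrite expnS expn1; nia.
  lia.
move: e; rewrite !modn_small ?lt // => /eqP e.
by apply/eqP; rewrite -(eqn_exp2l _ _ q_gt1) e.

Qed.

Definition muL : {poly L} := \prod_(k < m) ('X - (frob k b)%:P).

Lemma root_muL t : root muL t = (t \in [seq frob k b | k : 'I_m <- enum 'I_m]).
Proof.
have -> : muL = \prod_(a <- [seq frob k b | k : 'I_m <- enum 'I_m]) ('X - a%:P).
  by rewrite big_map big_enum.
exact: root_prod_XsubC.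
Qed.


Definition qpow (x : L) := x ^+ q.
Lemma qpow_nmod : nmod_morphism qpow.
Proof.
split; first by rewrite /qpow expr0n; case: q q_gt1.
by move=> x y; rewrite /qpow -(expn1 q) powqk_add.
Qed.
Lemma qpow_mon : monoid_morphism qpow.
Proof. by split; [rewrite /qpow expr1n | move=> x y; rewrite /qpow exprMn]. Qed.
HB.instance Definition _ := GRing.isNmodMorphism.Build L L qpow qpow_nmod.
HB.instance Definition _ := GRing.isMonoidMorphism.Build L L qpow qpow_mon.

Lemma muL_b : root muL b.
Proof.
rewrite root_muL; apply/mapP; exists (Ordinal m_gt0); first by rewrite mem_enum.
by rewrite frob0.
Qed.

Lemma muL_qpow : map_poly qpow muL = muL.
Proof.
rewrite /muL rmorph_prod /=.
have e k : qpow (frob k b) = frob (1 + k) b by rewrite -frob_comp /qpow [frob 1 _]ffunE expn1.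
under eq_bigr => k _ do rewrite map_polyXsubC.
transitivity (\prod_(k < m) ('X - (frob (1 + k) b)%:P)).
  by apply: eq_bigr => k _; congr (_ - _%:P); exact: e.
have fm : frob m b = frob 0 b by rewrite frob_mod modnn.
move: fm; case: m m_gt0 => // m' _ fm.
rewrite big_ord_recr big_ord_recl /= mulrC; congr (_ * _).
  by rewrite add1n fm.
Qed.

Lemma muL_coef i : muL`_i ^+ q = muL`_i.
Proof. by rewrite -{2}muL_qpow coef_map. Qed.


Lemma fixed_iota c : c ^+ q = c -> exists a, c = iota a.
Proof.
move=> hc; case: (boolP [exists a, c == iota a]) => [/existsP [a /eqP ->]|nin].
  by exists a.
exfalso.
pose rs := c :: [seq iota a | a <- enum F].
have hsz : size ('X^q - 'X : {poly L}) = q.+1.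
  by rewrite size_polyDl ?size_polyXn // size_polyN size_polyX ltnS q_gt1.
have nz : ('X^q - 'X : {poly L}) != 0 by rewrite -size_poly_eq0 hsz.
suff : (size rs < size (('X^q - 'X)%R : {poly L}))%N.
  by rewrite hsz /rs /= size_map -cardE ltnn.
apply: max_poly_roots nz _ _.
  apply/allP => x; rewrite inE => /orP [/eqP ->|/mapP [a _ ->]];
    by rewrite rootE !hornerE ?hc -?rmorphXn ?expf_card subrr.
rewrite /= map_inj_uniq ?enum_uniq ?andbT; last exact: fmorph_inj.
apply/mapP => [[a _ e]]; move/negP: nin; apply; apply/existsP; exists a.
by rewrite e.
Qed.

Definition pre (c : L) : F := odflt 0 [pick a | iota a == c].

Lemma preK c : (exists a, c = iota a) -> iota (pre c) = c.
Proof.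
case=> a ->; rewrite /pre; case: pickP => [a' /eqP //|/(_ a)].
by rewrite eqxx.
Qed.

Definition muF : {poly F} := \poly_(i < size muL) pre muL`_i.

Lemma muF_map : map_poly iota muF = muL.
Proof.
apply/polyP => i; rewrite coef_map coef_poly.
case: ltnP => h; first by rewrite /= preK //; apply: fixed_iota; exact: muL_coef.
by rewrite /= rmorph0 nth_default.
Qed.

Lemma gal_b s : s \in galois_set iota -> exists k : 'I_m, s b = frob k b.
Proof.
move=> hs; have : root muL (s b).
  by rewrite /root -muF_map -gs_horner // muF_map (rootP muL_b) gs0.
rewrite root_muL => /mapP [k _ ->]; by exists k.
Qed.

Lemma gal_frob s : s \in galois_set iota -> exists k : 'I_m, s = frob k.
Proof.
move=> hs; have [k hk] := gal_b hs; exists k; apply/ffunP => t.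
have [->|nz] := eqVneq t 0.
  by rewrite gs0 // ffunE expr0n expn_eq0 (negbTE (lt0n_neq0 (ltnW q_gt1))).
have [j ->] := prim_rootP hb (unitQ nz).
by rewrite gsX // hk !ffunE exprAC.
Qed.

End Beta.

Lemma gal_orbitE n (x : pt L n) :
  gal_orbit iota x = [set gal_act (frob k) x | k : 'I_m].
Proof.
have [b hb] := exists_beta.
apply/setP => y; apply/imsetP/imsetP => [[s hs ->]|[k _ ->]].
  by have [k ->] := gal_frob hb hs; exists k.
by exists (frob k) => //; apply: frob_gal.
Qed.

Lemma gal_act_comp n (x : pt L n) i j :
  gal_act (frob i) (gal_act (frob j) x) = gal_act (frob ((i + j) %% m)) x.
Proof.
by apply/ffunP => k; rewrite [LHS]ffunE [gal_act (frob j) x k]ffunE [RHS]ffunE frob_comp -frob_mod.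
Qed.

Lemma orbit_frob n (x : pt L n) (k : 'I_m) :
  gal_orbit iota (gal_act (frob k) x) = gal_orbit iota x.
Proof.
rewrite !gal_orbitE; apply/setP => y; apply/imsetP/imsetP => [[i _ ->]|[i _ ->]].
  rewrite gal_act_comp; exists (Ordinal (ltn_pmod (i + k) m_gt0)) => //.
exists (Ordinal (ltn_pmod (i + (m - k)) m_gt0)) => //=.
rewrite gal_act_comp modnDml -addnA subnK ?(ltnW (ltn_ord k)) //.
by rewrite modnDr modn_small.
Qed.

Lemma orbit_mem n (x z : pt L n) :
  x \in gal_orbit iota z -> gal_orbit iota x = gal_orbit iota z.
Proof.
move=> h; move: (h); rewrite {1}gal_orbitE => /imsetP [k _ ek].
by rewrite ek orbit_frob.
Qed.

Lemma mem_orbit_self n (x : pt L n) : x \in gal_orbit iota x.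
Proof.
rewrite gal_orbitE; apply/imsetP; exists (Ordinal m_gt0) => //.
by apply/ffunP => i; rewrite ffunE frob0.
Qed.

End Gal.

Lemma perm_ofE (T : finType) (g : T -> T) : injective g -> @Defs.perm_of T g =1 g.
Proof.
move=> ig x; rewrite /Defs.perm_of.
have aux : forall b (e : injectiveb g = b),
  (match b as b0 return injectiveb g = b0 -> {perm T} with
   | true => fun h => perm (injectiveP g h) | false => fun _ => 1%g end e) x = g x.
  case=> e; first by rewrite permE.
  by move/injectiveP: ig; rewrite e.
exact: aux.
Qed.

Section Perm.
Variables (F L : finFieldType) (iota : {rmorphism F -> L}) (n m : nat).
Hypothesis hL : #|L| = (#|F| ^ m)%N.
Hypothesis m_gt0 : (0 < m)%N.

Lemma mmap_ext (h1 h2 : 'I_n -> L) (p : {mpoly F[n]}) :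
  h1 =1 h2 -> mmap iota h1 p = mmap iota h2 p.
Proof.
by move=> e; rewrite /mmap; apply: eq_bigr => mo _; rewrite (mmap1_eq _ e).
Qed.

Variable P : 'I_n -> {mpoly F[n]}.
Local Notation f := (poly_act iota P).

Lemma poly_act_gal s (x : pt L n) : s \in galois_set iota ->
  f (gal_act s x) = gal_act s (f x).
Proof.
move=> hs; apply/ffunP => i; rewrite !ffunE (gs_mmap hs).
by apply: mmap_ext => j; rewrite ffunE.
Qed.

Lemma orbit_act (x : pt L n) : gal_orbit iota (f x) = f @: gal_orbit iota x.
Proof.
rewrite /gal_orbit -imset_comp; apply: eq_in_imset => s hs.
by rewrite /= poly_act_gal.
Qed.

Hypothesis injf : injective f.

Lemma Xset_img (x : pt L n) : x \in Xset iota n m -> f x \in Xset iota n m.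
Proof. by rewrite /Xset !inE (orbit_act x) (card_imset _ injf). Qed.

Lemma Xbar_img O : O \in Xbar iota n m -> f @: O \in Xbar iota n m.
Proof.
case/imsetP => x hx ->; rewrite -orbit_act; apply/imsetP; exists (f x) => //.
exact: Xset_img.
Qed.

Lemma orbit_permE O :
  orbit_perm iota m P O = if O \in Xbar iota n m then f @: O else O.
Proof.
rewrite /orbit_perm perm_ofE // => O1 O2.
case: (boolP (O1 \in _)) => h1; case: (boolP (O2 \in _)) => h2.
- exact: imset_inj.
- by move=> e; move: h2; rewrite -e Xbar_img.
- by move=> e; move: h1; rewrite e Xbar_img.
- by [].
Qed.

Lemma orbit_perm_orb (x : pt L n) : x \in Xset iota n m ->
  orbit_perm iota m P (gal_orbit iota x) = gal_orbit iota (f x).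
Proof.
move=> hx; rewrite orbit_permE orbit_act.
by have -> : gal_orbit iota x \in Xbar iota n m by apply/imsetP; exists x.
Qed.

Lemma Xset_pre (g : pt L n -> pt L n) (x : pt L n) :
  (forall y, f (g y) = y) -> x \in Xset iota n m -> g x \in Xset iota n m.
Proof.
move=> fg hx.
by move: hx; rewrite /Xset !inE -{1}(fg x) orbit_act (card_imset _ injf).
Qed.

Lemma orbit_perm_inv (g : pt L n -> pt L n) (x : pt L n) :
  (forall y, f (g y) = y) -> x \in Xset iota n m ->
  ((orbit_perm iota m P)^-1)%g (gal_orbit iota x) = gal_orbit iota (g x).
Proof.
move=> fg hx.
have hg : g x \in Xset iota n m.
  by move: hx; rewrite /Xset !inE -{1}(fg x) orbit_act (card_imset _ injf).
by rewrite -{1}(fg x) -orbit_perm_orb // permK.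
Qed.

Lemma orbit_perm_out O : O \notin Xbar iota n m ->
  orbit_perm iota m P O = O /\ ((orbit_perm iota m P)^-1)%g O = O.
Proof.
move=> hO; have e : orbit_perm iota m P O = O by rewrite orbit_permE (negbTE hO).
by split => //; rewrite -{1}e permK.
Qed.

End Perm.

Section Concrete.
Variables (F L : finFieldType) (iota : {rmorphism F -> L}) (m n' : nat).
Hypothesis hL : #|L| = (#|F| ^ m)%N.
Hypothesis m_gt0 : (0 < m)%N.
Variable b : L.
Hypothesis hb : (#|L|.-1).-primitive_root b.
Local Notation n := n'.+3.
Local Notation Q := #|L|.

Definition i0 : 'I_n := ord0.
Definition i1 : 'I_n := inord 1.
Definition i2 : 'I_n := inord 2.

Lemma i0v : val i0 = 0%N. Proof. by []. Qed.
Lemma i1v : val i1 = 1%N. Proof. by rewrite /= inordK. Qed.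
Lemma i2v : val i2 = 2%N. Proof. by rewrite /= inordK. Qed.

Lemma ord_cases (j : 'I_n) : [|| j == i0, j == i1, j == i2 | (3 <= j)%N].
Proof.
rewrite -!val_eqE /= i1v i2v.
by case: j => [[|[|[|k]]] ?].
Qed.

Lemma i01 : (i0 == i1) = false. Proof. by rewrite -val_eqE /= i1v. Qed.
Lemma i02 : (i0 == i2) = false. Proof. by rewrite -val_eqE /= i2v. Qed.
Lemma i12 : (i1 == i2) = false. Proof. by rewrite -val_eqE /= i1v i2v. Qed.

Definition dP (p : {mpoly F[n]}) : {mpoly F[n]} := 1 - p ^+ Q.-1.
Definition muM : {mpoly F[n]} := (map_poly (@mpolyC n F) (muF iota m b)).['X_i2].
Definition Epoly : {mpoly F[n]} :=
  dP muM * \prod_(j : 'I_n | (3 <= j)%N) dP 'X_j.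
Definition Fpoly : {mpoly F[n]} := dP 'X_i1 * Epoly.
Definition Ptri : 'I_n -> {mpoly F[n]} :=
  triangular_map (fun _ => 1) (fun i => if i == i0 then Fpoly else 0).
Definition Pswap : 'I_n -> {mpoly F[n]} :=
  affine_map (perm_mx (tperm i0 i1)) (fun _ => 0).

Definition E (x : pt L n) : bool :=
  ((muL F m b).[x i2] == 0) && [forall j : 'I_n, (3 <= j)%N ==> (x j == 0)].

Lemma ev_X (x : pt L n) i : mmap iota x 'X_i = x i.
Proof. by rewrite mmapX mmap1U. Qed.

Lemma ev_dP (x : pt L n) p :
  mmap iota x (dP p) = ((mmap iota x p == 0) : bool)%:R.
Proof.
rewrite /dP rmorphB rmorph1 rmorphXn /=.
have [->|nz] := eqVneq (mmap iota x p) 0.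
  by rewrite expr0n /= -(subnKC (Q_gt1 L)) subr0.
by rewrite unitQ // subrr.
Qed.

Lemma ev_muM (x : pt L n) : mmap iota x muM = (muL F m b).[x i2].
Proof.
rewrite /muM -horner_map /= ev_X -map_poly_comp.
rewrite -(muF_map iota hL m_gt0 b); congr (_.[_]).
by apply: eq_map_poly => c /=; rewrite mmapC.
Qed.

Lemma ev_E (x : pt L n) : mmap iota x Epoly = (E x)%:R.
Proof.
rewrite /Epoly rmorphM rmorph_prod /= ev_dP ev_muM /E.
case: (boolP [forall j : 'I_n, _]) => [/forallP hall|/forallPn [j]].
  rewrite big1 ?mulr1 ?andbT // => j hj.
  by have := hall j; rewrite hj /= ev_dP ev_X => ->.
rewrite negb_imply => /andP [hj nz].
rewrite (bigD1 j) //= ev_dP ev_X (negbTE nz) mul0r mulr0 andbF.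
by [].
Qed.

Lemma E_ext (x y : pt L n) :
  (forall j, j != i0 -> j != i1 -> x j = y j) -> E x = E y.
Proof.
move=> h; have h2 : x i2 = y i2 by apply: h; rewrite eq_sym ?i02 ?i12.
rewrite /E h2; congr (_ && _); apply: eq_forallb => j; apply: implyb_id2l => hj.
rewrite h //; apply/negP => /eqP ej; move: hj; rewrite ej /= ?i1v //.
Qed.


Definition upd (x : pt L n) (u v : L) : pt L n :=
  [ffun i => if i == i0 then u else if i == i1 then v else x i].

Lemma E_upd x u v : E (upd x u v) = E x.
Proof. by apply: E_ext => j h0 h1; rewrite ffunE (negbTE h0) (negbTE h1). Qed.

Lemma upd_id x : upd x (x i0) (x i1) = x.
Proof.
by apply/ffunP => i; rewrite ffunE; case: eqP => [->|_] //; case: eqP => [->|_].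
Qed.

Lemma upd_upd x a c u v : upd (upd x a c) u v = upd x u v.
Proof. by apply/ffunP => i; rewrite !ffunE; case: (i == i0); case: (i == i1). Qed.

Lemma upd0 x u v : upd x u v i0 = u. Proof. by rewrite ffunE eqxx. Qed.
Lemma upd1 x u v : upd x u v i1 = v. Proof. by rewrite ffunE eq_sym i01 eqxx. Qed.

Lemma natr_and (a c : bool) : (a%:R * c%:R : L) = (a && c)%:R.
Proof. by case: a; case: c; rewrite ?mul1r ?mul0r. Qed.

Lemma act_tri x :
  poly_act iota Ptri x = upd x (x i0 + ((x i1 == 0) && E x)%:R) (x i1).
Proof.
apply/ffunP => i; rewrite !ffunE /Ptri /triangular_map rmorphD rmorphM /=.
rewrite mpolyC1 rmorph1 mul1r ev_X.
case: eqP => [->|_]; first by rewrite /Fpoly rmorphM /= ev_dP ev_X ev_E natr_and.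
by rewrite rmorph0 addr0; case: eqP => [->|].
Qed.

Lemma act_tri_upd x u v :
  poly_act iota Ptri (upd x u v) = upd x (u + ((v == 0) && E x)%:R) v.
Proof. by rewrite act_tri upd0 upd1 E_upd upd_upd. Qed.

Definition Ainv (x : pt L n) : pt L n :=
  upd x (x i0 - ((x i1 == 0) && E x)%:R) (x i1).

Lemma Ainv_upd x u v : Ainv (upd x u v) = upd x (u - ((v == 0) && E x)%:R) v.
Proof. by rewrite /Ainv upd0 upd1 E_upd upd_upd. Qed.

Lemma tri_Ainv y : poly_act iota Ptri (Ainv y) = y.
Proof. by rewrite /Ainv act_tri_upd subrK upd_id. Qed.

Lemma Ainv_tri y : Ainv (poly_act iota Ptri y) = y.
Proof. by rewrite act_tri Ainv_upd addrK upd_id. Qed.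

Lemma act_swap x : poly_act iota Pswap x = upd x (x i1) (x i0).
Proof.
apply/ffunP => i; rewrite !ffunE /Pswap /affine_map rmorphD rmorph_sum /=.
rewrite mpolyC0 raddf0 addr0.
rewrite (bigD1 (tperm i0 i1 i)) //= big1 ?addr0.
  have -> : perm_mx (tperm i0 i1) i (tperm i0 i1 i) = 1 :> F.
    by rewrite /perm_mx /row_perm !mxE eqxx.
  rewrite mpolyC1 mul1r ev_X.
  by case: tpermP => [->|->|/eqP/negbTE-> /eqP/negbTE->]; rewrite ?eqxx // eq_sym i01.
move=> j hj.
have -> : perm_mx (tperm i0 i1) i j = 0 :> F.
  by rewrite /perm_mx /row_perm !mxE eq_sym (negbTE hj).
by rewrite mpolyC0 mul0r raddf0.
Qed.

Lemma swap_upd x u v : poly_act iota Pswap (upd x u v) = upd x v u.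
Proof. by rewrite act_swap upd0 upd1 upd_upd. Qed.

Lemma swap_inv y : poly_act iota Pswap (poly_act iota Pswap y) = y.
Proof. by rewrite (act_swap y) swap_upd upd_id. Qed.

Definition cc (e : bool) (t : L) : L := ((t == 0) && e)%:R.

Definition t2D (e : bool) (u v : L) : L * L :=
  let u1 := u - cc e v in let v1 := v - cc e u1 in
  let u2 := u1 + cc e v1 in (u2, v1 + cc e u2).

Local Notation S := (poly_act iota Pswap).
Local Notation A := (poly_act iota Ptri).

Definition Cpt (x : pt L n) : pt L n :=
  S (A (S (A (S (Ainv (S (Ainv x))))))).

Lemma Cpt_upd x u v : Cpt (upd x u v) = upd x (t2D (E x) u v).1 (t2D (E x) u v).2.
Proof.
by rewrite /Cpt Ainv_upd swap_upd Ainv_upd swap_upd act_tri_upd swap_upd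
  act_tri_upd swap_upd.
Qed.

Lemma t2D_false u v : t2D false u v = (u, v).
Proof. by rewrite /t2D /cc !andbF subr0 !addr0 subr0. Qed.

Lemma m1_nz : (- 1 : L) != 0. Proof. by rewrite oppr_eq0 oner_neq0. Qed.

Lemma natb (c : bool) : (c%:R : L) = if c then 1 else 0.
Proof. by case: c. Qed.

Lemma t2D_00 : t2D true 0 0 = (0, 1).
Proof. rewrite /t2D /cc !andbT !natb. by do 4 rewrite ?(eqxx, oppr0, subr0, sub0r, addr0, add0r, addNr, subrr, (negbTE m1_nz), (negbTE (oner_neq0 L))) /=. Qed.

Lemma t2D_01 : t2D true 0 1 = (1, 0).
Proof. rewrite /t2D /cc !andbT !natb. by do 4 rewrite ?(eqxx, oppr0, subr0, sub0r, addr0, add0r, addNr, subrr, (negbTE m1_nz), (negbTE (oner_neq0 L))) /=. Qed.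

Lemma t2D_10 : t2D true 1 0 = (0, 0).
Proof. rewrite /t2D /cc !andbT !natb. by do 4 rewrite ?(eqxx, oppr0, subr0, sub0r, addr0, add0r, addNr, subrr, (negbTE m1_nz), (negbTE (oner_neq0 L))) /=. Qed.

Lemma t2D_other u v :
  t2D true u v = (u, v) \/ [\/ (u, v) = (0, 0), (u, v) = (0, 1) | (u, v) = (1, 0)].
Proof.
rewrite /t2D /cc !andbT !natb.
have [->|hv] := eqVneq v 0.
  have [->|hu] := eqVneq u 0; first by right; constructor 1.
  have [->|hu1] := eqVneq u 1; first by right; constructor 3.
  have h1 : (u - 1 == 0) = false by rewrite subr_eq0 (negbTE hu1).
  by left; do 5 (rewrite ?(eqxx, oppr0, subr0, sub0r, addr0, add0r, addNr, subrr, subrK, (negbTE m1_nz), (negbTE (oner_neq0 L))) ?h1 ?(negbTE hu) /=).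
have [->|hu0] := eqVneq u 0; last first.
  by left; do 5 (rewrite ?(eqxx, oppr0, subr0, sub0r, addr0, add0r, addNr, subrr, subrK, (negbTE m1_nz), (negbTE (oner_neq0 L))) ?(negbTE hu0) ?(negbTE hv) /=).
have [->|hv1] := eqVneq v 1; first by right; constructor 2.
have h1 : (v - 1 == 0) = false by rewrite subr_eq0 (negbTE hv1).
by left; do 5 (rewrite ?(eqxx, oppr0, subr0, sub0r, addr0, add0r, addNr, subrr, subrK, (negbTE m1_nz), (negbTE (oner_neq0 L))) ?h1 ?(negbTE hv) /=).
Qed.

Definition zb : pt L n := [ffun i => if i == i2 then b else 0].
Definition z (u v : L) : pt L n := upd zb u v.

Lemma gal_actE (s : {ffun L -> L}) (x : pt L n) i : gal_act s x i = s (x i).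
Proof. exact: ffunE. Qed.

Lemma frob01 k (u : L) : (u == 0) || (u == 1) -> frob F L k u = u.
Proof.
case/orP => /eqP ->; rewrite ffunE ?expr1n //.
rewrite expr0n; have := expn_gt0 #|F| k; rewrite (ltnW (q_gt1 F)) /=.
by case: (_ ^ _)%N.
Qed.

Lemma z_i2 u v : z u v i2 = b.
Proof. by rewrite !ffunE eq_sym i02 eq_sym i12 eqxx. Qed.

Lemma big_ne (j : 'I_n) : (3 <= j)%N -> [/\ j != i0, j != i1 & j != i2].
Proof. by move=> hj; rewrite -!val_eqE /= i1v i2v; split; apply/eqP; lia. Qed.

Lemma z_big u v (j : 'I_n) : (3 <= j)%N -> z u v j = 0.
Proof.
by case/big_ne => h0 h1 h2; rewrite !ffunE (negbTE h0) (negbTE h1) (negbTE h2).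
Qed.

Lemma E_z u v : E (z u v).
Proof.
rewrite /z E_upd /E ffunE eqxx -/(root _ _) muL_b //=.
apply/forallP => j; apply/implyP => hj.
by case/big_ne: hj => _ _ h2; rewrite ffunE (negbTE h2).
Qed.

Lemma Xset_z u v : z u v \in Xset iota n m.
Proof.
rewrite /Xset inE (gal_orbitE iota hL m_gt0) card_imset ?card_ord //.
move=> k1 k2 /(congr1 (fun y : pt L n => y i2)); rewrite !gal_actE z_i2.
exact: (frob_b_inj hL m_gt0 hb).
Qed.

Lemma mem_orb_z (x : pt L n) u v : E x -> x i0 = u -> x i1 = v ->
  (u == 0) || (u == 1) -> (v == 0) || (v == 1) ->
  x \in gal_orbit iota (z u v).
Proof.
move=> /andP [hr /forallP hall] hx0 hx1 hu hv.
move: hr; rewrite -/(root _ _) root_muL => /mapP [k _ hk].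
rewrite (gal_orbitE iota hL m_gt0); apply/imsetP; exists k => //.
apply/ffunP => j; rewrite gal_actE.
case/or4P: (ord_cases j) => [/eqP->|/eqP->|/eqP->|hj].
- by rewrite upd0 frob01 // hx0.
- by rewrite upd1 frob01 // hx1.
- by rewrite z_i2.
- by rewrite z_big // (eqP (implyP (hall j) hj)) frob01 ?eqxx.
Qed.


Definition noX0 (p : {mpoly F[n]}) := forall mo : 'X_{1..n}, mo i0 != 0%N -> p@_mo = 0.

Lemma noX0_C c : noX0 c%:MP.
Proof.
move=> mo h; rewrite mcoeffC; case: eqP => [e|]; last by rewrite mulr0.
by move: h; rewrite e mnm0E.
Qed.

Lemma noX0_X (j : 'I_n) : j != i0 -> noX0 'X_j.
Proof.
move=> hj mo h; rewrite mcoeffX; case: eqP => // e.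
by move: h; rewrite -e mnm1E (negbTE hj).
Qed.

Lemma noX0_D p r : noX0 p -> noX0 r -> noX0 (p + r).
Proof. by move=> hp hr mo h; rewrite mcoeffD hp ?hr ?addr0. Qed.

Lemma noX0_N p : noX0 p -> noX0 (- p).
Proof. by move=> hp mo h; rewrite mcoeffN hp ?oppr0. Qed.

Lemma noX0_M p r : noX0 p -> noX0 r -> noX0 (p * r).
Proof.
move=> hp hr mo h; rewrite mcoeffM big1 // => k /eqP e.
have : (k.1 i0 != 0)%N || (k.2 i0 != 0)%N.
  have e0 := congr1 (fun mm : 'X_{1..n} => mm i0) e.
  by move: h; rewrite /= e0 mnmDE; case: (k.1 i0); case: (k.2 i0).
by case/orP => [/hp ->|/hr ->]; rewrite ?mul0r ?mulr0.
Qed.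

Lemma noX0_1 : noX0 1. Proof. by rewrite -mpolyC1; apply: noX0_C. Qed.

Lemma noX0_Xn p k : noX0 p -> noX0 (p ^+ k).
Proof.
move=> hp; elim: k => [|k IH]; first by rewrite expr0; apply: noX0_1.
by rewrite exprS; apply: noX0_M.
Qed.

Lemma noX0_dP p : noX0 p -> noX0 (dP p).
Proof. by move=> hp; apply: noX0_D; [apply: noX0_1 | apply/noX0_N/noX0_Xn]. Qed.

Lemma noX0_sum (I : Type) (r : seq I) (Pr : pred I) (f : I -> {mpoly F[n]}) :
  (forall i, Pr i -> noX0 (f i)) -> noX0 (\sum_(i <- r | Pr i) f i).
Proof.
move=> h; apply: (big_ind noX0) => //; last exact: noX0_D.
by rewrite -mpolyC0; apply: noX0_C.
Qed.

Lemma noX0_prod (I : Type) (r : seq I) (Pr : pred I) (f : I -> {mpoly F[n]}) :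
  (forall i, Pr i -> noX0 (f i)) -> noX0 (\prod_(i <- r | Pr i) f i).
Proof.
move=> h; apply: (big_ind noX0) => //; [exact: noX0_1 | exact: noX0_M].
Qed.

Lemma noX0_Fpoly : noX0 Fpoly.
Proof.
apply: noX0_M; first by apply/noX0_dP/noX0_X; rewrite eq_sym i01.
apply: noX0_M.
  apply/noX0_dP; rewrite /muM horner_coef; apply: noX0_sum => i _.
  by rewrite coef_map; apply: noX0_M; [apply: noX0_C | apply/noX0_Xn/noX0_X; rewrite eq_sym i02].
apply: noX0_prod => j hj; apply/noX0_dP/noX0_X.
by case/big_ne: hj.
Qed.

Lemma tri_gen : tame_generator Ptri.
Proof.
right; exists (fun _ => 1), (fun i => if i == i0 then Fpoly else 0).
split; first by move=> _; apply: oner_neq0.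
split => // i; rewrite /only_later_vars.
case: eqP => [->|_]; last by rewrite msupp0.
apply/allP => mo; rewrite mcoeff_msupp => nz.
apply/forallP => j; apply/implyP => hj.
have -> : j = i0 by apply/val_inj => /=; move: hj; rewrite /= leqn0 => /eqP.
by apply/negPn/negP => h; move: nz; rewrite noX0_Fpoly // eqxx.
Qed.

Lemma swap_gen : tame_generator Pswap.
Proof.
left; exists (perm_mx (tperm i0 i1)), (fun _ => 0); split => //.
exact: unitmx_perm.
Qed.


Local Notation pa := (orbit_perm iota m Ptri).
Local Notation ps := (orbit_perm iota m Pswap).

Definition cperm : {perm {set pt L n}} :=
  (pa^-1 * (ps^-1 * (pa^-1 * (ps^-1 * (pa * (ps * (pa * (ps * 1))))))))%g.

Lemma cperm_in : in_G iota m cperm.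
Proof.
do 4 (apply: in_G_mulV; [first [exact: tri_gen | exact: swap_gen] | ]).
do 4 (apply: in_G_mul; [first [exact: tri_gen | exact: swap_gen] | ]).
exact: in_G1.
Qed.

Lemma injA : injective (poly_act iota Ptri). Proof. exact: can_inj Ainv_tri. Qed.
Lemma injS : injective (poly_act iota Pswap). Proof. exact: can_inj swap_inv. Qed.

Lemma cperm_orb x : x \in Xset iota n m ->
  cperm (gal_orbit iota x) = gal_orbit iota (Cpt x).
Proof.
move=> hx.
have h1 := Xset_pre injA tri_Ainv hx.
have h2 := Xset_pre injS swap_inv h1.
have h3 := Xset_pre injA tri_Ainv h2.
have h4 := Xset_pre injS swap_inv h3.
have h5 := Xset_img injA h4.
have h6 := Xset_img injS h5.
have h7 := Xset_img injA h6.
rewrite /cperm !permM (orbit_perm_inv injA tri_Ainv hx).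
rewrite (orbit_perm_inv injS swap_inv h1) (orbit_perm_inv injA tri_Ainv h2).
rewrite (orbit_perm_inv injS swap_inv h3) (orbit_perm_orb injA h4).
by rewrite (orbit_perm_orb injS h5) (orbit_perm_orb injA h6) (orbit_perm_orb injS h7) perm1.
Qed.

Lemma Cpt_noE x : ~~ E x -> Cpt x = x.
Proof.
move=> h; have := Cpt_upd x (x i0) (x i1); rewrite upd_id => ->.
by rewrite (negbTE h) t2D_false /= upd_id.
Qed.

Lemma Cpt_z u v : Cpt (z u v) = upd zb (t2D true u v).1 (t2D true u v).2.
Proof.
have hE : E zb by have := E_z u v; rewrite /z E_upd.
by rewrite /z Cpt_upd hE.
Qed.

Lemma orb_z_inj u v u' v' : (u == 0) || (u == 1) -> (v == 0) || (v == 1) ->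
  z u' v' \in gal_orbit iota (z u v) -> u' = u /\ v' = v.
Proof.
move=> hu hv; rewrite (gal_orbitE iota hL m_gt0) => /imsetP [k _ ek].
have e0 := congr1 (fun y : pt L n => y i0) ek.
have e1 := congr1 (fun y : pt L n => y i1) ek.
move: e0 e1; rewrite /= !gal_actE /z !upd0 !upd1 !frob01 //.
Qed.

Lemma three_cycle : is_3cycle_on (Xbar iota n m) cperm.
Proof.
exists (gal_orbit iota (z 0 0)), (gal_orbit iota (z 0 1)), (gal_orbit iota (z 1 0)).
have n01 : (0 : L) <> 1 by move=> e; move: (oner_neq0 L); rewrite -e eqxx.
split.
- by split; apply/imsetP; [exists (z 0 0) | exists (z 0 1) | exists (z 1 0)];
    rewrite ?Xset_z.
- split; apply/eqP => e.
  + have : z 0 1 \in gal_orbit iota (z 0 0) by rewrite e (mem_orbit_self iota hL m_gt0).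
    by case/orb_z_inj; rewrite ?eqxx // => _ /esym.
  + have : z 1 0 \in gal_orbit iota (z 0 1).
      by rewrite e (mem_orbit_self iota hL m_gt0).
    by case/orb_z_inj; rewrite ?eqxx ?orbT // => /esym.
  + have : z 1 0 \in gal_orbit iota (z 0 0).
      by rewrite e (mem_orbit_self iota hL m_gt0).
    by case/orb_z_inj; rewrite ?eqxx ?orbT // => /esym.
- by split; rewrite cperm_orb ?Xset_z // Cpt_z ?t2D_00 ?t2D_01 ?t2D_10.
move=> y /imsetP [x hx ->] hnot; rewrite cperm_orb //.
case: (boolP (E x)) => hE; last by rewrite Cpt_noE.
have cx := Cpt_upd x (x i0) (x i1); rewrite upd_id hE in cx.
case: (t2D_other (x i0) (x i1)) => [e|].
  by rewrite cx e /= upd_id.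
case=> [] [e0 e1]; move: hnot.
- have hm : x \in gal_orbit iota (z 0 0) by apply: mem_orb_z; rewrite ?eqxx.
  by rewrite (orbit_mem hL m_gt0 hm) inE eqxx.
- have hm : x \in gal_orbit iota (z 0 1) by apply: mem_orb_z; rewrite ?eqxx ?orbT.
  by rewrite (orbit_mem hL m_gt0 hm) !inE eqxx orbT.
- have hm : x \in gal_orbit iota (z 1 0) by apply: mem_orb_z; rewrite ?eqxx ?orbT.
  by rewrite (orbit_mem hL m_gt0 hm) !inE eqxx !orbT.
Qed.

End Concrete.

Theorem mainTheorem10 (q m n : nat) (F L : finFieldType)
  (iota : {rmorphism F -> L}) :
  #|F| = q -> #|L| = (q ^ m)%N -> (0 < m)%N -> (3 <= n)%N ->
  exists s : {perm {set pt L n}},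
    in_G iota m s /\ is_3cycle_on (Xbar iota n m) s.
Proof.
move=> hq hL m_gt0; subst q.
case: n => [|[|[|n']]] // _.
have [b hb] := exists_beta L.
exists (cperm iota m n' b); split; first exact: cperm_in.
exact: three_cycle.
Qed.
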